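(* Let $M\ge1$, $\alpha\in(0,1)$, $R_{th}>0$ and $\varepsilon=2^{2R_{th}/(1-\alpha)}-1$. For each $m\in\{1,\dots,M\}$ and each link $j\in\{SR_m,R_mD\}$ let IQI parameters $\xi_{t_j},\xi_{r_j}>0$, $\phi_{t_j},\phi_{r_j}\in\mathbb{R}$ be given, with $\mu_{t_j}=\tfrac12(1+\xi_{t_j}e^{i\phi_{t_j}})$, $v_{t_j}=\tfrac12(1-\xi_{t_j}e^{-i\phi_{t_j}})$, $\mu_{r_j}=\tfrac12(1+\xi_{r_j}e^{-i\phi_{r_j}})$, $v_{r_j}=\tfrac12(1-\xi_{r_j}e^{i\phi_{r_j}})$, $p_j=|\mu_{t_j}\mu_{r_j}+v_{t_j}^*v_{r_j}|^2$, $q_j=|\mu_{r_j}v_{t_j}+\mu_{t_j}^*v_{r_j}|^2$, and assume $p_j-\varepsilon q_j>0$. Let the random variables $X_j$, $j\in\{SR_m,R_mD: 1\le m\le M\}$, be mutually independent with $X_j$ exponential of rate $\lambda_j>0$, and let all estimation-error variances equal $t>0$: $\sigma^2_{e_j}=t$. Define $$C^\infty_j=\frac{1-\alpha}{2}\log_2\!\Big(1+\frac{X_jp_j}{\sigma^2_{e_j}p_j+X_jq_j+\sigma^2_{e_j}q_j}\Big).$$ Then $$\Pr\Big\{\max_{1\le m\le M}\min(C^\infty_{SR_m},C^\infty_{R_mD})<R_{th}\Big\}=\prod_{m=1}^M\Big(1-e^{-\lambda_{SR_m}H_{1,m}-\lambda_{R_mD}H_{2,m}}\Big),$$ where $H_{1,m}=\dfrac{\varepsilon\sigma^2_{e_{SR_m}}(p_{SR_m}+q_{SR_m})}{p_{SR_m}-\varepsilon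 q_{SR_m}}$ and $H_{2,m}=\dfrac{\varepsilon\sigma^2_{e_{R_mD}}(p_{R_mD}+q_{R_mD})}{p_{R_mD}-\varepsilon q_{R_mD}}$.
   Context: Decode-and-forward relaying with $M$ relays and optimal relay selection: the relay maximizing the end-to-end capacity $\min(C_{SR_m},C_{R_mD})$ is selected. $X_j=|\hat h_j|^2$ are estimated Rayleigh channel gains, $\sigma^2_{e_j}$ channel-estimation-error variances, $p_j,q_j$ the I/Q-imbalance gain coefficients. The left-hand side is the asymptotic (high-SNR) outage probability; $z^*$ is complex conjugate, $i$ the imaginary unit. *)

(* Defs.v *)
From HB Require Import structures.
From mathcomp Require Import all_boot all_order all_algebra.
From mathcomp Require Import all_classical all_reals all_analysis.
From mathcomp Require Import complex.
Set Implicit Arguments. Unset Strict Implicit. Unset Printing Implicit Defensive.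
Import Order.TTheory GRing.Theory Num.Theory.
Local Open Scope classical_set_scope.
Local Open Scope ring_scope.

Definition link := bool.
Definition SR : link := false.
Definition RD : link := true.

Definition log2 {R : realType} (x : R) : R := ln x / ln 2.

Definition expi {R : realType} (phi : R) : R[i] := (cos phi +i* sin phi)%C.

Definition mu_t {R : realType} (xi phi : R) : R[i] :=
  (((2:R)^-1)%:C * (1 + xi%:C * expi phi))%C.
Definition v_t {R : realType} (xi phi : R) : R[i] :=
  (((2:R)^-1)%:C * (1 - xi%:C * expi (- phi)))%C.
Definition mu_r {R : realType} (xi phi : R) : R[i] :=
  (((2:R)^-1)%:C * (1 + xi%:C * expi (- phi)))%C.
Definition v_r {R : realType} (xi phi : R) : R[i] :=
  (((2:R)^-1)%:C * (1 - xi%:C * expi phi))%C.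

Definition p_iqi {R : realType} (xit phit xir phir : R) : R :=
  ComplexField.Normc.normc (mu_t xit phit * mu_r xir phir + conjc (v_t xit phit) * v_r xir phir) ^+ 2.
Definition q_iqi {R : realType} (xit phit xir phir : R) : R :=
  ComplexField.Normc.normc (mu_r xir phir * v_t xit phit + conjc (mu_t xit phit) * v_r xir phir) ^+ 2.

Definition Cinf {R : realType} (alpha X p q s2 : R) : R :=
  (1 - alpha) / 2 * log2 (1 + X * p / (s2 * p + X * q + s2 * q)).

Definition mutually_independent {R : realType} d (T : measurableType d)
    (P : probability T R) (I : finType) (X : I -> {RV P >-> R}) : Prop :=
  forall (J : {set I}) (B : I -> set R), (forall i, measurable (B i)) ->
    P [set w | forall i, i \in J -> B i (X i w)] =
    (\prod_(i in J) P [set w | B i (X i w)])%E.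

(* Main.v *)
Require Import Defs.
From HB Require Import structures.
From mathcomp Require Import all_boot all_order all_algebra.
From mathcomp Require Import all_classical all_reals all_analysis.
From mathcomp Require Import complex.
From mathcomp Require Import ring lra measurable_realfun.
Import Order.TTheory GRing.Theory Num.Theory.
Local Open Scope classical_set_scope.
Local Open Scope ring_scope.
Lemma keyalg (R : realType) (x p q t eps : R) : 0 < t -> 0 <= q -> 0 < eps ->
  0 < p - eps * q ->
  (1 + x * p / (t * p + x * q + t * q) < eps + 1) <->
  (x < eps * t * (p + q) / (p - eps * q) /\ 0 <= t * p + x * q + t * q).
Proof.
move=> t0 q0 e0 pq.
have p0 : 0 < p by nra.
rewrite [1 + _]addrC ltrD2r ltr_pdivlMr; last by nra.
set D := t * p + x * q + t * q.
have [D0|D0|D0] := ltgtP D 0.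
- rewrite ltr_ndivrMr //; split => [h|[_ h]]; last by lra.
  exfalso. have tp : 0 < t * p by apply: mulr_gt0.
  have tq : 0 <= t * q by apply: mulr_ge0; lra.
  have xn : x < 0.
    rewrite ltNge; apply/negP => x0; have := mulr_ge0 x0 q0; rewrite /D in D0; lra.
  have h1 : x * (p - eps * q) < 0 by rewrite pmulr_llt0.
  have h2 : 0 < eps * t * (p + q) by apply: mulr_gt0; [apply: mulr_gt0|lra].
  rewrite /D in h; lra.
- rewrite ltr_pdivrMr //.
  have e1 : eps * D = eps * t * p + eps * (x * q) + eps * t * q by rewrite /D; ring.
  have e2 : x * (p - eps * q) = x * p - eps * (x * q) by ring.
  have e3 : eps * t * (p + q) = eps * t * p + eps * t * q by ring.
  rewrite e1 e2 e3; split => [h|[h _]]; [split; lra|lra].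
- have tp : 0 < t * p by apply: mulr_gt0.
  have tq : 0 <= t * q by apply: mulr_ge0; lra.
  have xn : x < 0.
    rewrite ltNge; apply/negP => x0; have := mulr_ge0 x0 q0; rewrite /D in D0; lra.
  have h1 : x * (p - eps * q) < 0 by rewrite pmulr_llt0.
  have h2 : 0 < eps * t * (p + q) by apply: mulr_gt0; [apply: mulr_gt0|lra].
  rewrite D0 invr0 mulr0; split => _; [split; lra|exact e0].
Qed.
Lemma ln_lt_expR (R : realType) (y L : R) : 0 < L -> (ln y < L) <-> (y < expR L).
Proof.
move=> L0; have [y0|y0] := ltP 0 y.
- by rewrite -ltr_expR lnK.
- have := @ln_le0 R y (le_trans y0 ler01) => h.
  split => _; [exact: le_lt_trans y0 (expR_gt0 _)|exact: le_lt_trans h L0].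
Qed.

Lemma Cinf_lt (R : realType) (alpha Rth x p q t : R) : 0 < alpha < 1 -> 0 < Rth ->
  (Cinf alpha x p q t < Rth) <->
  (1 + x * p / (t * p + x * q + t * q) < 2 `^ (2 * Rth / (1 - alpha))).
Proof.
move=> /andP[a0 a1] R0.
set y := 1 + _.
have l2 : 0 < ln (2:R) by apply: ln_gt0; lra.
have k0 : 0 < (1 - alpha) / 2 by apply: divr_gt0; lra.
have c0 : 0 < 2 * Rth / (1 - alpha) by apply: divr_gt0; lra.
rewrite /powR (_ : (2:R) == 0 = false); last by apply/negbTE; rewrite pnatr_eq0.
  rewrite -ln_lt_expR; last exact: mulr_gt0.
rewrite /Cinf /log2 -/y.
have hR : Rth = (1 - alpha) / 2 * (2 * Rth / (1 - alpha) * ln 2 / ln 2).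
  field; apply/andP; split; apply: lt0r_neq0 => //; lra.
rewrite {1}hR.
by rewrite ltr_pM2l // ltr_pM2r ?invr_gt0.
Qed.
Lemma expo_G (R : realType) (lam H : R) (G : set R) : 0 < lam -> 0 < H ->
  (forall x, 0 <= x -> (G x <-> x < H)) ->
  exponential_prob lam G = (1 - (expR (- lam * H))%:E)%E.
Proof.
move=> l0 H0 hG.
rewrite -exponential_prob_itv0c // /exponential_prob.
rewrite -integral_itv_bndo_bndc; last first.
  apply/measurable_EFinP; apply: measurable_funTS; exact: measurable_exponential_pdf.
rewrite integral_mkcond [RHS]integral_mkcond; apply: eq_integral => x _.
rewrite !patchE.
have [x0|x0] := ltP x 0.
  by rewrite lt0_exponential_pdf //; case: ifP; case: ifP.
congr (if _ then _ else _).
apply/idP/idP; rewrite !inE /= in_itv /= x0 /=; by move/hG => /(_ x0).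
Qed.
Lemma measurable_G (R : realType) (H p q t : R) : 0 <= q -> 0 < t * p + t * q ->
  measurable [set x : R | x < H /\ 0 <= t * p + x * q + t * q].
Proof.
move=> q0 a0.
have [qz|qp] := eqVneq q 0.
  rewrite (_ : [set _ | _] = `]-oo, H[%classic); first exact: measurable_itv.
  apply/seteqP; split => x /=; rewrite in_itv /= qz mulr0 addr0.
    by case.
  by move=> h; split => //; rewrite mulr0; rewrite qz mulr0 in a0; lra.
have qp' : 0 < q by rewrite lt_neqAle eq_sym qp.
rewrite (_ : [set _ | _] = `[(- (t * p + t * q)) / q, H[%classic); first exact: measurable_itv.
apply/seteqP; split => x /=; rewrite in_itv /= ler_pdivrMr //.
  by case=> -> h; rewrite andbT; lra.
by case/andP => h ->; split => //; lra.
Qed.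
Theorem corollary5 (R : realType) (d : measure_display) (T : measurableType d)
  (P : probability T R) (M : nat) (alpha Rth t : R)
  (xit xir phit phir lam : 'I_M -> link -> R)
  (X : 'I_M -> link -> {RV P >-> R}) :
  (0 < M)%N -> 0 < alpha < 1 -> 0 < Rth -> 0 < t ->
  let eps := 2 `^ (2 * Rth / (1 - alpha)) - 1 in
  let p m j := p_iqi (xit m j) (phit m j) (xir m j) (phir m j) in
  let q m j := q_iqi (xit m j) (phit m j) (xir m j) (phir m j) in
  (forall m j, 0 < xit m j) -> (forall m j, 0 < xir m j) ->
  (forall m j, 0 < p m j - eps * q m j) ->
  (forall m j, 0 < lam m j) ->
  mutually_independent (fun mj : 'I_M * link => X mj.1 mj.2) ->
  (forall m j (A : set R), measurable A ->
     distribution P (X m j) A = exponential_prob (lam m j) A) ->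
  let C m j w := Cinf alpha (X m j w) (p m j) (q m j) t in
  let H m j := eps * t * (p m j + q m j) / (p m j - eps * q m j) in
  P [set w | (\big[Order.max/-oo]_(m < M) (Num.min (C m SR w) (C m RD w))%:E
              < Rth%:E)%E] =
  (\prod_(m < M) (1 - expR (- lam m SR * H m SR - lam m RD * H m RD)))%:E.
Proof.
move=> M0 ha hR t0 eps p q _ _ hpq hlam hind hdist C H.
have ha' := ha; move/andP: ha' => [a0 a1].
have e0 : 0 < eps.
  rewrite /eps subr_gt0 /powR (_ : (2:R) == 0 = false); last by apply/negbTE; rewrite pnatr_eq0.
  rewrite expR_gt1; apply: mulr_gt0; first by apply: divr_gt0; lra.
  by apply: ln_gt0; lra.
have q0 m j : 0 <= q m j by rewrite /q /q_iqi sqr_ge0.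
have p0 m j : 0 < p m j by have := hpq m j; have := q0 m j; nra.
have H0 m j : 0 < H m j.
  rewrite /H; apply: divr_gt0 => //; apply: mulr_gt0; first exact: mulr_gt0.
  by have := p0 m j; have := q0 m j; lra.
pose Gs m j := [set x : R | x < H m j /\ 0 <= t * p m j + x * q m j + t * q m j].
have mGs m j : measurable (Gs m j).
  apply: measurable_G => //; have := p0 m j; have := q0 m j => ??.
  by rewrite -mulrDr; apply: mulr_gt0 => //; lra.
have hC m j w : C m j w < Rth <-> Gs m j (X m j w).
  rewrite /C Cinf_lt // (_ : 2 `^ _ = eps + 1); last by rewrite /eps subrK.
  exact: keyalg.
have hG m j : exponential_prob (lam m j) (Gs m j) = (1 - (expR (- lam m j * H m j))%:E)%E.
  apply: expo_G => // x x0; rewrite /Gs /=; split; first by case.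
  move=> xH; split => //; have := p0 m j; have := q0 m j => ??.
  by have := mulr_ge0 x0 (q0 m j); have := mulr_gt0 t0 (p0 m j); have := mulr_ge0 (ltW t0) (q0 m j); lra.
pose Bf (f : {ffun 'I_M -> bool}) (i : 'I_M * link) : set R :=
  if f i.1 then (if i.2 then Gs i.1 RD else ~` Gs i.1 SR)
  else (if i.2 then setT else Gs i.1 SR).
pose Rect f := [set w | forall i, i \in [set: 'I_M * link]%SET -> Bf f i (X i.1 i.2 w)].
have -> : [set w | (\big[Order.max/-oo]_(m < M) (Num.min (C m SR w) (C m RD w))%:E
              < Rth%:E)%E] = \bigcup_(f in [set: {ffun 'I_M -> bool}]) Rect f.
  apply/seteqP; split => w /=.
  - move/bigmax_ltP => [_ hm].
    exists [ffun m => ~~ `[< Gs m SR (X m SR w) >]] => //.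
    move=> [m j] _ /=; rewrite /Bf ffunE /=.
    have := hm m isT; rewrite lte_fin gt_min => /orP[/hC h1|/hC h2];
      case: asboolP => //= h; case: j => //.
  - move=> [f _ hf]; apply/bigmax_ltP; split; first exact: ltNyr. move=> m _.
    rewrite lte_fin gt_min; apply/orP.
    have := hf (m, SR) (finset.in_setT _); have := hf (m, RD) (finset.in_setT _).
    rewrite /Bf /=; case: (f m) => /= h1 h2.
      by right; apply/hC.
    by left; apply/hC.
have mRect f : measurable (Rect f).
  rewrite (_ : Rect f = \bigcap_(i in [set: 'I_M * link]) (X i.1 i.2 @^-1` Bf f i)).
    apply: fin_bigcap_measurable; first exact: finite_finset.
    move=> [m j] _; apply: measurable_funPTI; rewrite /Bf /=.
    by case: (f m); case: j => //=; apply: measurableC.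
  apply/seteqP; split => w /=.
    by move=> h i _; apply: h; rewrite finset.in_setT.
  by move=> h i _; apply: h.
rewrite measure_fin_bigcup //; last first.
  move=> f g _ _ [w [/= hf hg]]; apply/ffunP => m.
  have := hf (m, SR) (finset.in_setT _); have := hg (m, SR) (finset.in_setT _).
  by rewrite /Bf /=; case: (f m); case: (g m).
  exact: finite_finset.
rewrite (fsbigE (enum {ffun 'I_M -> bool})) //; last first.
  by move=> i _; rewrite mem_enum.
  exact: enum_uniq.
rewrite (eq_bigl (fun _ => true)); last by move=> i; apply/mem_set.
rewrite big_enum /=.
pose e m j := expR (- lam m j * H m j).
pose r (f : {ffun 'I_M -> bool}) (i : 'I_M * link) : R :=
  if f i.1 then (if i.2 then 1 - e i.1 RD else e i.1 SR)
  else (if i.2 then 1 else 1 - e i.1 SR).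
have hF f i : P [set w | Bf f i (X i.1 i.2 w)] = (r f i)%:E.
  case: i => m j; rewrite /Bf /r /=.
  have hd m' j' A : measurable A -> P [set w | A (X m' j' w)] = exponential_prob (lam m' j') A.
    by move=> mA; rewrite -hdist.
  case: (f m); case: j => /=.
  all: try by rewrite hd // hG.
  all: try exact: probability_setT.
  rewrite (_ : [set w | _] = ~` [set w | Gs m SR (X m SR w)]) //.
  rewrite probability_setC; last exact: measurable_funPTI.
  rewrite hd // hG.
  apply: (@eq_trans _ _ ((1 - (1 - e m SR))%:E)); first by [].
  by rewrite subKr.
have hRect f : P (Rect f) = (\prod_(i : 'I_M * link) r f i)%:E.
  have hmB : forall i, measurable (Bf f i).
    move=> [m j]; rewrite /Bf /=; case: (f m); case: j => //=; apply: measurableC => //.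
  have h := hind [set: 'I_M * link]%SET (Bf f) hmB.
  etransitivity; first exact: h.
  rewrite -prodEFin; apply: eq_big => i; first by rewrite finset.in_setT.
  by move=> _; exact: hF.
rewrite (eq_bigr _ (fun f _ => hRect f)) sumEFin; congr (_%:E).
pose g m (b : bool) := if b then (1 - e m RD) * e m SR else 1 * (1 - e m SR).
have hpair f : \prod_(i : 'I_M * link) r f i = \prod_(m < M) g m (f m).
  rewrite -(pair_bigA _ (fun m j => r f (m, j))) /=.
  apply: eq_bigr => m _; rewrite big_bool /r /g /=.
  by case: (f m).
rewrite (eq_bigr _ (fun f _ => hpair f)).
rewrite -(bigA_distr_bigA (fun m b => g m b)) /=.
apply: eq_bigr => m _; rewrite big_bool /g /e.
rewrite (_ : - lam m SR * H m SR - lam m RD * H m RD =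
   - lam m SR * H m SR + - lam m RD * H m RD); last by ring.
rewrite expRD /=; ring.
Qed.
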